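(* The real vector space with basis $J,H,G_a,P_a,J_a,H_a,G_{ab},P_{ab},J^*,H^*,G^*_{ab},P^*_{ab}$ with the following nonzero brackets is a Lie algebra (the double extension of $\operatorname{span}\{P_a,G_a,H_a,J_a\}$ by $\operatorname{span}\{H,J,P_{ab},G_{ab}\}$): $[J,G_a]=\epsilon_{am}G_m$, $[J,P_a]=\epsilon_{am}P_m$, $[G_a,H]=-\epsilon_{am}P_m$, $[G_a,G_b]=\epsilon_{ab}H^*$, $[G_a,P_b]=\epsilon_{ab}J^*$; $[J,J_a]=\epsilon_{am}J_m$, $[J,G_{ab}]=-\epsilon_{m(a}G_{b)m}$, $[J,H_a]=\epsilon_{am}H_m$, $[J,P_{ab}]=-\epsilon_{m(a}P_{b)m}$, $[G_a,G_{bc}]=-\epsilon_{a(b}J_{c)}$, $[G_a,P_{bc}]=-\epsilon_{a(b}H_{c)}$, $[H,J_a]=\epsilon_{am}H_m$, $[H,G_{ab}]=-\epsilon_{m(a}P_{b)m}$, $[P_a,G_{bc}]=-\epsilon_{a(b}H_{c)}$; $[J_a,G_{bc}]=\delta_{a(b}\epsilon_{c)m}G_m$, $[J_a,P_{bc}]=\delta_{a(b}\epsilon_{c)m}P_m$, $[G_{ab},G_{cd}]=\delta_{(a(c}\epsilon_{d)b)}J$, $[G_{ab},H_c]=-\delta_{c(a}\epsilon_{b)m}P_m$, $[G_{ab},P_{cd}]=\delta_{(a(c}\epsilon_{d)b)}H$; $[G_a,J_b]=-\epsilon_{am}P^*_{mb}$, $[G_a,H_b]=-\epsilon_{am}G^*_{mb}$,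 $[P_a,J_b]=-\epsilon_{am}G^*_{mb}$, $[J_a,J_b]=-\epsilon_{ab}H^*$, $[J_a,H_b]=-\epsilon_{ab}J^*$; $[J,P^*_{ab}]=-\epsilon_{m(a}P^*_{b)m}$, $[J,G^*_{ab}]=-\epsilon_{m(a}G^*_{b)m}$, $[H,P^*_{ab}]=-\epsilon_{m(a}G^*_{b)m}$, $[G_{ab},J^*]=-\epsilon_{m(a}G^*_{b)m}$, $[G_{ab},H^*]=-\epsilon_{m(a}P^*_{b)m}$, $[G_{ab},G^*_{cd}]=\epsilon_{(a(c}\delta_{d)b)}J^*$, $[G_{ab},P^*_{cd}]=\epsilon_{(a(c}\delta_{d)b)}H^*$, $[P_{ab},H^*]=-\epsilon_{m(a}G^*_{b)m}$, $[P_{ab},P^*_{cd}]=\epsilon_{(a(c}\delta_{d)b)}J^*$. It admits the invariant metric with nonzero entries $\langle P_a,G_b\rangle=\delta_{ab}$, $\langle H_a,J_b\rangle=-\delta_{ab}$, $\langle H,H^*\rangle=1$, $\langle J,J^*\rangle=1$, $\langle P_{ab},P^*_{cd}\rangle=\delta_{a(c}\delta_{d)b}$, $\langle G_{ab},G^*_{cd}\rangle=\delta_{a(c}\delta_{d)b}$.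
   Context: Indices $a,b,c,d,m\in\{1,2\}$, summed when repeated, $\epsilon_{12}=1$; $G_{ab},P_{ab},G^*_{ab},P^*_{ab}$ are symmetric. Symmetrization without normalization ($T_{(ab)}=T_{ab}+T_{ba}$, nested from outermost to innermost). An invariant metric is a symmetric nondegenerate bilinear form with $\langle[Z,X],Y\rangle+\langle X,[Z,Y]\rangle=0$. *)

(* Defs.v *)
From HB Require Import structures.
From mathcomp Require Import all_boot all_order all_algebra.
Set Implicit Arguments. Unset Strict Implicit. Unset Printing Implicit Defensive.
Import Order.TTheory GRing.Theory Num.Theory.
Local Open Scope ring_scope.

(* Indices a,b,... in {1,2} are
   represented by 'I_2 (0 ~ 1, 1 ~ 2).  The symmetric families
   G_ab, P_ab, G*_ab, P*_ab take two indices; gGG a b and gGG b a denote the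
   SAME basis vector (see [code]). *)
Inductive gen : Type :=
  | gJ | gH
  | gG of 'I_2 | gP of 'I_2 | gJa of 'I_2 | gHa of 'I_2
  | gGG of 'I_2 & 'I_2 | gPP of 'I_2 & 'I_2
  | gJs | gHs
  | gGs of 'I_2 & 'I_2 | gPs of 'I_2 & 'I_2.

(* position of the basis vector in {0,..,23}; symmetric pairs (a,b) are sent
   to a+b (i.e. 11 -> 0, 12 = 21 -> 1, 22 -> 2) *)
Definition code (g : gen) : nat :=
  match g with
  | gJ => 0 | gH => 1
  | gG a => 2 + a | gP a => 4 + a | gJa a => 6 + a | gHa a => 8 + a
  | gGG a b => 10 + (a + b) | gPP a b => 13 + (a + b)
  | gJs => 16 | gHs => 17
  | gGs a b => 18 + (a + b) | gPs a b => 21 + (a + b)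
  end%N.

Definition o0 : 'I_2 := ord0.
Definition o1 : 'I_2 := ord_max.

Definition decode (i : 'I_24) : gen :=
  match nat_of_ord i with
  | 0 => gJ | 1 => gH
  | 2 => gG o0 | 3 => gG o1 | 4 => gP o0 | 5 => gP o1
  | 6 => gJa o0 | 7 => gJa o1 | 8 => gHa o0 | 9 => gHa o1
  | 10 => gGG o0 o0 | 11 => gGG o0 o1 | 12 => gGG o1 o1
  | 13 => gPP o0 o0 | 14 => gPP o0 o1 | 15 => gPP o1 o1
  | 16 => gJs | 17 => gHs
  | 18 => gGs o0 o0 | 19 => gGs o0 o1 | 20 => gGs o1 o1
  | 21 => gPs o0 o0 | 22 => gPs o0 o1 | _ => gPs o1 o1
  end.

Section Alg.
Variable R : realFieldType.

Definition V := 'rV[R]_24.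

Definition e (g : gen) : V := delta_mx 0 (inord (code g)).

Definition eps (a b : 'I_2) : R :=
  if (a == o0) && (b == o1) then 1
  else if (a == o1) && (b == o0) then -1 else 0.
Definition dlt (a b : 'I_2) : R := (a == b)%:R.

(* - eps_{m(a} X_{b)m} = -(eps_{ma} X_{bm} + eps_{mb} X_{am}) *)
Definition symE (X : 'I_2 -> 'I_2 -> gen) (a b : 'I_2) : V :=
  - \sum_(m < 2) (eps m a *: e (X b m) + eps m b *: e (X a m)).

(* delta_{(a(c} eps_{d)b)} and eps_{(a(c} delta_{d)b)} *)
Definition Sde (a b c d : 'I_2) : R :=
  dlt a c * eps d b + dlt a d * eps c b + dlt b c * eps d a + dlt b d * eps c a.
Definition Sed (a b c d : 'I_2) : R :=
  eps a c * dlt d b + eps a d * dlt c b + eps b c * dlt d a + eps b d * dlt c a.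

Definition tbl (x y : gen) : option V :=
  match x, y with
  | gJ, gG a => Some (\sum_(m < 2) eps a m *: e (gG m))
  | gJ, gP a => Some (\sum_(m < 2) eps a m *: e (gP m))
  | gG a, gH => Some (- \sum_(m < 2) eps a m *: e (gP m))
  | gG a, gG b => Some (eps a b *: e gHs)
  | gG a, gP b => Some (eps a b *: e gJs)
  | gJ, gJa a => Some (\sum_(m < 2) eps a m *: e (gJa m))
  | gJ, gGG a b => Some (symE gGG a b)
  | gJ, gHa a => Some (\sum_(m < 2) eps a m *: e (gHa m))
  | gJ, gPP a b => Some (symE gPP a b)
  | gG a, gGG b c => Some (- (eps a b *: e (gJa c) + eps a c *: e (gJa b)))
  | gG a, gPP b c => Some (- (eps a b *: e (gHa c) + eps a c *: e (gHa b)))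
  | gH, gJa a => Some (\sum_(m < 2) eps a m *: e (gHa m))
  | gH, gGG a b => Some (symE gPP a b)
  | gP a, gGG b c => Some (- (eps a b *: e (gHa c) + eps a c *: e (gHa b)))
  | gJa a, gGG b c =>
      Some (\sum_(m < 2) (dlt a b * eps c m + dlt a c * eps b m) *: e (gG m))
  | gJa a, gPP b c =>
      Some (\sum_(m < 2) (dlt a b * eps c m + dlt a c * eps b m) *: e (gP m))
  | gGG a b, gGG c d => Some (Sde a b c d *: e gJ)
  | gGG a b, gHa c =>
      Some (- \sum_(m < 2) (dlt c a * eps b m + dlt c b * eps a m) *: e (gP m))
  | gGG a b, gPP c d => Some (Sde a b c d *: e gH)
  | gG a, gJa b => Some (- \sum_(m < 2) eps a m *: e (gPs m b))
  | gG a, gHa b => Some (- \sum_(m < 2) eps a m *: e (gGs m b))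
  | gP a, gJa b => Some (- \sum_(m < 2) eps a m *: e (gGs m b))
  | gJa a, gJa b => Some (- (eps a b *: e gHs))
  | gJa a, gHa b => Some (- (eps a b *: e gJs))
  | gJ, gPs a b => Some (symE gPs a b)
  | gJ, gGs a b => Some (symE gGs a b)
  | gH, gPs a b => Some (symE gGs a b)
  | gGG a b, gJs => Some (symE gGs a b)
  | gGG a b, gHs => Some (symE gPs a b)
  | gGG a b, gGs c d => Some (Sed a b c d *: e gJs)
  | gGG a b, gPs c d => Some (Sed a b c d *: e gHs)
  | gPP a b, gHs => Some (symE gGs a b)
  | gPP a b, gPs c d => Some (Sed a b c d *: e gJs)
  | _, _ => None
  end.

Definition brg (x y : gen) : V :=
  match tbl x y with
  | Some v => v
  | None => match tbl y x with Some v => - v | None => 0 end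
  end.

Definition liebr (x y : V) : V :=
  \sum_(i < 24) \sum_(j < 24) (x 0 i * y 0 j) *: brg (decode i) (decode j).

Definition mtbl (x y : gen) : option R :=
  match x, y with
  | gP a, gG b => Some (dlt a b)
  | gHa a, gJa b => Some (- dlt a b)
  | gH, gHs => Some 1
  | gJ, gJs => Some 1
  | gPP a b, gPs c d => Some (dlt a c * dlt d b + dlt a d * dlt c b)
  | gGG a b, gGs c d => Some (dlt a c * dlt d b + dlt a d * dlt c b)
  | _, _ => None
  end.

Definition mg (x y : gen) : R :=
  match mtbl x y with
  | Some r => r
  | None => match mtbl y x with Some r => r | None => 0 end
  end.

Definition metr (x y : V) : R :=
  \sum_(i < 24) \sum_(j < 24) x 0 i * y 0 j * mg (decode i) (decode j).

End Alg.

(* Main.v *)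
Require Import Defs.
From HB Require Import structures.
From mathcomp Require Import all_boot all_order all_algebra ring.
Import GRing.Theory Num.Theory.
Local Open Scope ring_scope.

(* sparse integer vectors: lists of (coordinate, coefficient) *)
Definition SV := seq (nat * int).
Definition sv_at (s : SV) (k : nat) : int :=
  foldr (fun p acc => (if p.1 == k then p.2 else 0) + acc) 0 s.
Definition eS (g : gen) : SV := [:: (code g, 1)].
Definition sclS (c : int) (s : SV) : SV := [seq (p.1, c * p.2) | p <- s].
Definition oppS (s : SV) : SV := [seq (p.1, - p.2) | p <- s].
Definition addS (s t : SV) : SV := s ++ t.
Definition sum2S (F : 'I_2 -> SV) : SV := F o0 ++ F o1.
Definition zeroS : SV := [::].
Arguments sv_at : simpl never.
Arguments eS : simpl never.
Arguments sclS : simpl never.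
Arguments oppS : simpl never.
Arguments addS : simpl never.
Arguments sum2S : simpl never.
Arguments zeroS : simpl never.

Definition epsZ (a b : 'I_2) : int :=
  if (a == o0) && (b == o1) then 1
  else if (a == o1) && (b == o0) then -1 else 0.
Definition dltZ (a b : 'I_2) : int := (a == b)%:Z.

Definition symES (X : 'I_2 -> 'I_2 -> gen) (a b : 'I_2) : SV :=
  oppS (sum2S (fun m => addS (sclS (epsZ m a) (eS (X b m))) (sclS (epsZ m b) (eS (X a m))))).
Definition SdeZ (a b c d : 'I_2) : int :=
  dltZ a c * epsZ d b + dltZ a d * epsZ c b + dltZ b c * epsZ d a + dltZ b d * epsZ c a.
Definition SedZ (a b c d : 'I_2) : int :=
  epsZ a c * dltZ d b + epsZ a d * dltZ c b + epsZ b c * dltZ d a + epsZ b d * dltZ c a.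

Definition tblS (x y : gen) : option SV :=
  match x, y with
  | gJ, gG a => Some (sum2S (fun m => sclS (epsZ a m) (eS (gG m))))
  | gJ, gP a => Some (sum2S (fun m => sclS (epsZ a m) (eS (gP m))))
  | gG a, gH => Some (oppS (sum2S (fun m => sclS (epsZ a m) (eS (gP m)))))
  | gG a, gG b => Some (sclS (epsZ a b) (eS gHs))
  | gG a, gP b => Some (sclS (epsZ a b) (eS gJs))
  | gJ, gJa a => Some (sum2S (fun m => sclS (epsZ a m) (eS (gJa m))))
  | gJ, gGG a b => Some (symES gGG a b)
  | gJ, gHa a => Some (sum2S (fun m => sclS (epsZ a m) (eS (gHa m))))
  | gJ, gPP a b => Some (symES gPP a b)
  | gG a, gGG b c => Some (oppS (addS (sclS (epsZ a b) (eS (gJa c))) (sclS (epsZ a c) (eS (gJa b)))))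
  | gG a, gPP b c => Some (oppS (addS (sclS (epsZ a b) (eS (gHa c))) (sclS (epsZ a c) (eS (gHa b)))))
  | gH, gJa a => Some (sum2S (fun m => sclS (epsZ a m) (eS (gHa m))))
  | gH, gGG a b => Some (symES gPP a b)
  | gP a, gGG b c => Some (oppS (addS (sclS (epsZ a b) (eS (gHa c))) (sclS (epsZ a c) (eS (gHa b)))))
  | gJa a, gGG b c =>
      Some (sum2S (fun m => sclS (dltZ a b * epsZ c m + dltZ a c * epsZ b m) (eS (gG m))))
  | gJa a, gPP b c =>
      Some (sum2S (fun m => sclS (dltZ a b * epsZ c m + dltZ a c * epsZ b m) (eS (gP m))))
  | gGG a b, gGG c d => Some (sclS (SdeZ a b c d) (eS gJ))
  | gGG a b, gHa c =>
      Some (oppS (sum2S (fun m => sclS (dltZ c a * epsZ b m + dltZ c b * epsZ a m) (eS (gP m)))))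
  | gGG a b, gPP c d => Some (sclS (SdeZ a b c d) (eS gH))
  | gG a, gJa b => Some (oppS (sum2S (fun m => sclS (epsZ a m) (eS (gPs m b)))))
  | gG a, gHa b => Some (oppS (sum2S (fun m => sclS (epsZ a m) (eS (gGs m b)))))
  | gP a, gJa b => Some (oppS (sum2S (fun m => sclS (epsZ a m) (eS (gGs m b)))))
  | gJa a, gJa b => Some (oppS (sclS (epsZ a b) (eS gHs)))
  | gJa a, gHa b => Some (oppS (sclS (epsZ a b) (eS gJs)))
  | gJ, gPs a b => Some (symES gPs a b)
  | gJ, gGs a b => Some (symES gGs a b)
  | gH, gPs a b => Some (symES gGs a b)
  | gGG a b, gJs => Some (symES gGs a b)
  | gGG a b, gHs => Some (symES gPs a b)
  | gGG a b, gGs c d => Some (sclS (SedZ a b c d) (eS gJs))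
  | gGG a b, gPs c d => Some (sclS (SedZ a b c d) (eS gHs))
  | gPP a b, gHs => Some (symES gGs a b)
  | gPP a b, gPs c d => Some (sclS (SedZ a b c d) (eS gJs))
  | _, _ => None
  end.

Definition brgS (x y : gen) : SV :=
  match tblS x y with
  | Some v => v
  | None => match tblS y x with Some v => oppS v | None => zeroS end
  end.

Definition mtblZ (x y : gen) : option int :=
  match x, y with
  | gP a, gG b => Some (dltZ a b)
  | gHa a, gJa b => Some (- dltZ a b)
  | gH, gHs => Some 1
  | gJ, gJs => Some 1
  | gPP a b, gPs c d => Some (dltZ a c * dltZ d b + dltZ a d * dltZ c b)
  | gGG a b, gGs c d => Some (dltZ a c * dltZ d b + dltZ a d * dltZ c b)
  | _, _ => None
  end.

Definition mgZ (x y : gen) : int :=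
  match mtblZ x y with
  | Some r => r
  | None => match mtblZ y x with Some r => r | None => 0 end
  end.

Definition decodeN (n : nat) : gen :=
  match n with
  | 0 => gJ | 1 => gH
  | 2 => gG o0 | 3 => gG o1 | 4 => gP o0 | 5 => gP o1
  | 6 => gJa o0 | 7 => gJa o1 | 8 => gHa o0 | 9 => gHa o1
  | 10 => gGG o0 o0 | 11 => gGG o0 o1 | 12 => gGG o1 o1
  | 13 => gPP o0 o0 | 14 => gPP o0 o1 | 15 => gPP o1 o1
  | 16 => gJs | 17 => gHs
  | 18 => gGs o0 o0 | 19 => gGs o0 o1 | 20 => gGs o1 o1
  | 21 => gPs o0 o0 | 22 => gPs o0 o1 | _ => gPs o1 o1
  end%N.

Definition SB (i j : nat) : SV := brgS (decodeN i) (decodeN j).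
Definition CZ (i j k : nat) : int := sv_at (SB i j) k.
Definition MZ (i j : nat) : int := mgZ (decodeN i) (decodeN j).



Definition idx := iota 0 24.
Definition SBtab : seq (seq SV) := [seq [seq SB i j | j <- idx] | i <- idx].
Definition sbt (T : seq (seq SV)) (i j : nat) : SV :=
  if (i < 24)%N && (j < 24)%N then nth [::] (nth [::] T i) j else SB i j.
Definition keys (s : SV) : seq nat := [seq p.1 | p <- s].
Definition sumL (s : SV) (G : nat -> int) : int := foldr (fun p acc => p.2 * G p.1 + acc) 0 s.
Definition fl (f : nat -> nat -> SV) (i : nat) (s : SV) : SV :=
  flatten [seq sclS p.2 (f i p.1) | p <- s].
Definition JV (f : nat -> nat -> SV) (i j l : nat) : SV :=
  fl f i (f j l) ++ fl f j (f l i) ++ fl f l (f i j).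

Definition check_keys : bool :=
  all (fun i => all (fun j => all (fun p => p.1 < 24)%N (SB i j)) idx) idx.
Definition check_anti : bool := let T := SBtab in
  all (fun i => all (fun j => all (fun k => sv_at (sbt T i j) k == - sv_at (sbt T j i) k)
     (keys (sbt T i j ++ sbt T j i))) idx) idx.
Definition check_msym : bool :=
  all (fun i => all (fun j => MZ i j == MZ j i) idx) idx.
Definition check_jac : bool := let T := SBtab in
  all (fun i => all (fun j => all (fun l =>
    let v := JV (sbt T) i j l in all (fun k => sv_at v k == 0) (keys v)) idx) idx) idx.
Definition check_inv : bool := let T := SBtab in
  all (fun i => all (fun j => all (fun l =>
    sumL (sbt T i j) (fun n => MZ n l) + sumL (sbt T i l) (fun n => MZ j n) == 0) idx) idx) idx.
Definition partner (k : nat) : nat := find (fun j => MZ k j != 0) idx.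
Definition check_nd : bool :=
  all (fun k => (partner k < 24)%N && (MZ k (partner k) != 0) &&
     all (fun i => (i != k) ==> (MZ i (partner k) == 0)) idx) idx.

Lemma check_keys_ok : check_keys = true. Proof. vm_cast_no_check (erefl true). Qed.
Lemma check_anti_ok : check_anti = true. Proof. vm_cast_no_check (erefl true). Qed.
Lemma check_msym_ok : check_msym = true. Proof. vm_cast_no_check (erefl true). Qed.
Lemma check_jac_ok : check_jac = true. Proof. vm_cast_no_check (erefl true). Qed.
Lemma check_inv_ok : check_inv = true. Proof. vm_cast_no_check (erefl true). Qed.
Lemma check_nd_ok : check_nd = true. Proof. vm_cast_no_check (erefl true). Qed.



Lemma svD s t k : sv_at (addS s t) k = sv_at s k + sv_at t k.
Proof. by elim: s => [|p s IH] /=; rewrite /sv_at /addS /= ?add0r // -addrA; congr (_ + _). Qed.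
Lemma svC s t k : sv_at (s ++ t) k = sv_at s k + sv_at t k.
Proof. exact: svD. Qed.
Lemma svN s k : sv_at (oppS s) k = - sv_at s k.
Proof.
elim: s => [|p s IH]; first by rewrite /sv_at /= oppr0.
rewrite /oppS /sv_at /= -/(sv_at _ k) -/(sv_at _ k).
move: IH; rewrite /oppS => ->; rewrite opprD; congr (_ + _); by case: ifP; rewrite ?oppr0.
Qed.
Lemma svZ c s k : sv_at (sclS c s) k = c * sv_at s k.
Proof.
elim: s => [|p s IH]; first by rewrite /sv_at /= mulr0.
rewrite /sclS /sv_at /= -/(sv_at _ k) -/(sv_at _ k).
move: IH; rewrite /sclS => ->; rewrite mulrDr; congr (_ + _); by case: ifP; rewrite ?mulr0.
Qed.
Lemma sv2 (F : 'I_2 -> SV) k : sv_at (sum2S F) k = sv_at (F o0) k + sv_at (F o1) k.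
Proof. exact: svC. Qed.
Lemma sv0 k : sv_at zeroS k = 0. Proof. by []. Qed.
Lemma sv_nokey s k : k \notin keys s -> sv_at s k = 0.
Proof.
elim: s => [|p s IH] //=; rewrite inE negb_or => /andP [H1 H2].
rewrite /sv_at /= -/(sv_at _ k) IH // eq_sym (negbTE H1) add0r //.
Qed.
Lemma sumLE s G : sumL s G = \sum_(p <- s) p.2 * G p.1.
Proof. by elim: s => [|p s IH]; rewrite ?big_nil ?big_cons //= IH. Qed.

Lemma in_idx (i : 'I_24) : (i : nat) \in idx.
Proof. by rewrite mem_iota /=. Qed.

Lemma sbtE i j : sbt SBtab i j = SB i j.
Proof.
rewrite /sbt; case: ifP => // /andP [Hi Hj].
rewrite (nth_map 0%N) ?size_iota // nth_iota // (nth_map 0%N) ?size_iota // nth_iota //.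
Qed.

Lemma sumsv (s : SV) (G : nat -> int) : all (fun p => p.1 < 24)%N s ->
  \sum_(m < 24) sv_at s m * G m = \sum_(p <- s) p.2 * G p.1.
Proof.
elim: s => [|p s IH]; first by move=> _; rewrite big_nil big1 // => m _; rewrite mul0r.
move=> /= /andP [Hp Hs]; rewrite big_cons -IH //.
have -> : \sum_(m < 24) sv_at (p :: s) m * G m =
   \sum_(m < 24) ((if p.1 == m then p.2 else 0) * G m) + \sum_(m < 24) sv_at s m * G m.
  by rewrite -big_split; apply: eq_bigr => m _; rewrite /sv_at /= mulrDl.
congr (_ + _); rewrite (bigD1 (Ordinal Hp)) //= eqxx big1 ?addr0 // => m Hm.
have -> : (p.1 == m) = false.
  by apply/negbTE; move: Hm; apply: contra => /eqP E; apply/eqP/val_inj.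
by rewrite mul0r.
Qed.

Lemma svF (s : SV) (f : nat -> nat -> SV) i k :
  sv_at (fl f i s) k = \sum_(p <- s) p.2 * sv_at (f i p.1) k.
Proof.
elim: s => [|p s IH]; first by rewrite big_nil.
by rewrite big_cons /fl /= svC svZ -IH.
Qed.

Lemma JV_ext (f g : nat -> nat -> SV) i j l : (forall a b, f a b = g a b) -> JV f i j l = JV g i j l.
Proof.
move=> E; rewrite /JV /fl !E.
have H : forall a, [seq sclS p.2 (f a p.1) | p <- g j l] = [seq sclS p.2 (g a p.1) | p <- g j l].
  by move=> a; apply: eq_map => p; rewrite E.
rewrite !(eq_map (fun p => congr1 (sclS p.2) (E _ p.1))) //.
Qed.



Lemma keysE (i j : 'I_24) : all (fun p => p.1 < 24)%N (SB i j).
Proof. by move: check_keys_ok => /allP/(_ _ (in_idx i))/allP/(_ _ (in_idx j)). Qed.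

Lemma antiE (i j k : 'I_24) : CZ i j k = - CZ j i k.
Proof.
rewrite /CZ; case: (boolP ((k : nat) \in keys (SB i j ++ SB j i))) => Hk.
  move: check_anti_ok => /allP/(_ _ (in_idx i))/allP/(_ _ (in_idx j)).
  by rewrite !sbtE => /allP/(_ _ Hk)/eqP.
move: Hk; rewrite /keys map_cat mem_cat negb_or => /andP [H1 H2].
by rewrite !sv_nokey // oppr0.
Qed.

Lemma msymE (i j : 'I_24) : MZ i j = MZ j i.
Proof.
by move: check_msym_ok => /allP/(_ _ (in_idx i))/allP/(_ _ (in_idx j))/eqP.
Qed.

Lemma invZ (i j l : 'I_24) :
  \sum_(a < 24) (CZ i j a * MZ a l + CZ i l a * MZ j a) = 0.
Proof.
rewrite big_split /= /CZ (sumsv _ (fun n => MZ n l) (keysE i j)).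
rewrite (sumsv _ (fun n => MZ j n) (keysE i l)) -(sumLE _ (fun n => MZ n l)) -sumLE.
move: check_inv_ok => /allP/(_ _ (in_idx i))/allP/(_ _ (in_idx j))/allP/(_ _ (in_idx l)) H.
by apply/eqP; rewrite -(sbtE i j) -(sbtE i l).
Qed.

Lemma jacZ (i j l k : 'I_24) :
  \sum_(m < 24) (CZ j l m * CZ i m k + CZ l i m * CZ j m k + CZ i j m * CZ l m k) = 0.
Proof.
rewrite !big_split /= /CZ.
rewrite (sumsv _ (fun n => sv_at (SB i n) k) (keysE j l)).
rewrite (sumsv _ (fun n => sv_at (SB j n) k) (keysE l i)).
rewrite (sumsv _ (fun n => sv_at (SB l n) k) (keysE i j)).
rewrite -!(svF _ SB) -!svC.
have E : JV SB i j l = JV (sbt SBtab) i j l by apply: JV_ext => a b; rewrite sbtE.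
rewrite -catA -[_ ++ _]/(JV SB i j l) E.
case: (boolP ((k : nat) \in keys (JV (sbt SBtab) i j l))) => Hk; last by rewrite sv_nokey.
move: check_jac_ok => /allP/(_ _ (in_idx i))/allP/(_ _ (in_idx j))/allP/(_ _ (in_idx l)).
by move=> /allP/(_ _ Hk)/eqP.
Qed.

Lemma ndE (k : 'I_24) : exists p : 'I_24, MZ k p != 0 /\ forall i : 'I_24, i != k -> MZ i p = 0.
Proof.
move: check_nd_ok => /allP/(_ _ (in_idx k)) /andP [/andP [Hp Hn] /allP Ha].
exists (Ordinal Hp); split => // i Hi.
by apply/eqP; move: (Ha _ (in_idx i)) => /implyP; apply.
Qed.



Section S.
Variable R : realFieldType.
Implicit Types (u v : V R) (k : 'I_24).

Lemma code_lt g : (code g < 24)%N.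
Proof. by case: g => *; rewrite /code; repeat match goal with a : 'I_2 |- _ => case: a => [[|[|]]] //= _ end. Qed.

Lemma eE g k : (e R g) 0 k = (sv_at (eS g) k)%:~R.
Proof.
rewrite /e /sv_at /eS /= addr0 mxE eqxx /=.
have -> : (k == inord (code g)) = (k == code g :> nat).
  by rewrite -val_eqE /= inordK ?code_lt.
by rewrite eq_sym; case: ifP.
Qed.

Lemma epsE a b : eps R a b = (epsZ a b)%:~R.
Proof. by rewrite /eps /epsZ; case: ifP => _; [|case: ifP => _]; rewrite ?rmorphN ?rmorph1 ?rmorph0. Qed.

Lemma dltE a b : dlt R a b = (dltZ a b)%:~R.
Proof. by []. Qed.

Lemma addE u v k : (u + v) 0 k = u 0 k + v 0 k. Proof. by rewrite mxE. Qed.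
Lemma oppE u k : (- u) 0 k = - u 0 k. Proof. by rewrite mxE. Qed.
Lemma sclE c u k : (c *: u) 0 k = c * u 0 k. Proof. by rewrite mxE. Qed.
Lemma zeroE k : (0 : V R) 0 k = 0. Proof. by rewrite mxE. Qed.
Lemma sumE2 (F : 'I_2 -> V R) k : (\sum_(m < 2) F m) 0 k = F o0 0 k + F o1 0 k.
Proof.
rewrite summxE big_ord_recl big_ord_recl big_ord0 addr0.
by congr (_ + (F _) 0 k); apply/val_inj.
Qed.

Lemma brgE0 x y k : (brg R x y) 0 k = (sv_at (brgS x y) k)%:~R.
Proof.
case: x => [||a|a|a|a|a b|a b|||a b|a b]; case: y => [||c|c|c|c|c d|c d|||c d|c d];
rewrite /brg /brgS /= /symE /symES /Sde /SdeZ /Sed /SedZ;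
rewrite ?(addE, oppE, sclE, sumE2, eE, epsE, dltE, zeroE);
rewrite ?(svD, svN, svZ, sv2, sv0);
rewrite ?(rmorphD, rmorphN, rmorphM, rmorph0) //.
Qed.

Lemma brgE (i j : 'I_24) k : (brg R (decode i) (decode j)) 0 k = (CZ i j k)%:~R.
Proof. by rewrite brgE0. Qed.

Lemma mgE x y : mg R x y = (mgZ x y)%:~R.
Proof.
case: x => [||a|a|a|a|a b|a b|||a b|a b]; case: y => [||c|c|c|c|c d|c d|||c d|c d];
rewrite /mg /mgZ /= ?dltE ?(rmorphD, rmorphN, rmorphM, rmorph0, rmorph1) //.
Qed.

Lemma liebrE (x y : V R) k :
  liebr x y 0 k = \sum_(i < 24) \sum_(j < 24) x 0 i * y 0 j * (CZ i j k)%:~R.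
Proof.
rewrite /liebr summxE; apply: eq_bigr => i _; rewrite summxE; apply: eq_bigr => j _.
by rewrite sclE brgE.
Qed.

Lemma metrE (x y : V R) :
  metr x y = \sum_(i < 24) \sum_(j < 24) x 0 i * y 0 j * (MZ i j)%:~R.
Proof.
rewrite /metr; apply: eq_bigr => i _; apply: eq_bigr => j _.
by rewrite mgE.
Qed.

End S.

Section G.
Context {R : realFieldType}.
Notation I := 'I_24.

Lemma rot3 (F : I -> I -> I -> R) :
  \sum_(a < 24) \sum_(b < 24) \sum_(c < 24) F a b c =
  \sum_(c < 24) \sum_(a < 24) \sum_(b < 24) F a b c.
Proof.
rewrite (eq_bigr (fun a => \sum_(c < 24) \sum_(b < 24) F a b c)); last first.
  by move=> a _; rewrite exchange_big.
by rewrite exchange_big.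
Qed.

Lemma L1 (x y z : I -> R) (A : I -> I -> I -> R) (B : I -> I -> R) :
  \sum_(i < 24) \sum_(m < 24) x i * (\sum_(j < 24) \sum_(l < 24) y j * z l * A j l m) * B i m
  = \sum_(i < 24) \sum_(j < 24) \sum_(l < 24) x i * y j * z l * (\sum_(m < 24) A j l m * B i m).
Proof.
apply: eq_bigr => i _.
rewrite (eq_bigr (fun m => \sum_(j < 24) \sum_(l < 24) x i * (y j * z l * A j l m) * B i m));
  last first.
  move=> m _; rewrite mulr_sumr mulr_suml; apply: eq_bigr => j _.
  by rewrite mulr_sumr mulr_suml.
rewrite exchange_big; apply: eq_bigr => j _.
rewrite exchange_big; apply: eq_bigr => l _.
rewrite mulr_sumr; apply: eq_bigr => m _; ring.
Qed.

Lemma L2 (P Q y : I -> R) (A : I -> I -> I -> R) (B : I -> I -> R) :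
  \sum_(a < 24) \sum_(b < 24) (\sum_(i < 24) \sum_(j < 24) P i * Q j * A i j a) * y b * B a b
  = \sum_(i < 24) \sum_(j < 24) \sum_(b < 24) P i * Q j * y b * (\sum_(a < 24) A i j a * B a b).
Proof.
rewrite (eq_bigr (fun a => \sum_(b < 24) \sum_(i < 24) \sum_(j < 24) P i * Q j * y b * (A i j a * B a b)));
  last first.
  move=> a _; apply: eq_bigr => b _; rewrite !mulr_suml; apply: eq_bigr => i _.
  rewrite !mulr_suml; apply: eq_bigr => j _; ring.
rewrite rot3; apply: eq_bigr => i _; rewrite rot3; apply: eq_bigr => j _.
rewrite exchange_big; apply: eq_bigr => b _; rewrite mulr_sumr //.
Qed.

Lemma L3 (x P Q : I -> R) (A : I -> I -> I -> R) (B : I -> I -> R) :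
  \sum_(a < 24) \sum_(b < 24) x a * (\sum_(i < 24) \sum_(l < 24) P i * Q l * A i l b) * B a b
  = \sum_(i < 24) \sum_(a < 24) \sum_(l < 24) P i * x a * Q l * (\sum_(b < 24) A i l b * B a b).
Proof.
rewrite (eq_bigr (fun a => \sum_(b < 24) \sum_(i < 24) \sum_(l < 24) P i * x a * Q l * (A i l b * B a b)));
  last first.
  move=> a _; apply: eq_bigr => b _; rewrite mulr_sumr mulr_suml; apply: eq_bigr => i _.
  rewrite mulr_sumr mulr_suml; apply: eq_bigr => l _; ring.
rewrite rot3; apply: eq_bigr => i _.
apply: eq_bigr => a _.
rewrite exchange_big; apply: eq_bigr => l _; rewrite mulr_sumr //.
Qed.

Lemma sum3D (F G : I -> I -> I -> R) :
  \sum_(i < 24) \sum_(j < 24) \sum_(l < 24) F i j l + \sum_(i < 24) \sum_(j < 24) \sum_(l < 24) G i j l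
  = \sum_(i < 24) \sum_(j < 24) \sum_(l < 24) (F i j l + G i j l).
Proof.
rewrite -big_split; apply: eq_bigr => i _; rewrite -big_split; apply: eq_bigr => j _.
by rewrite -big_split.
Qed.

Lemma intr_sum (F : I -> int) : (\sum_(m < 24) F m)%:~R = \sum_(m < 24) ((F m)%:~R : R).
Proof. by rewrite rmorph_sum. Qed.

End G.

Theorem mainTheorem11 (R : realFieldType) :
  (forall x : V R, liebr x x = 0) /\
  (forall x y z : V R,
      liebr x (liebr y z) + liebr y (liebr z x) + liebr z (liebr x y) = 0) /\
  (forall x y : V R, metr x y = metr y x) /\
  (forall x : V R, (forall y : V R, metr x y = 0) -> x = 0) /\
  (forall x y z : V R, metr (liebr z x) y + metr x (liebr z y) = 0).
Proof.
split.
  move=> x; apply/rowP => k; rewrite liebrE mxE.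
  set S := \sum_(i < 24) _.
  have HS : S = - S.
    rewrite {1}/S exchange_big /S -sumrN; apply: eq_bigr => i _.
    rewrite -sumrN; apply: eq_bigr => j _.
    by rewrite (antiE j i k) rmorphN /=; ring.
  have : S *+ 2 == 0 by rewrite mulr2n {1}HS addNr.
  by rewrite mulrn_eq0 /= => /eqP.
split.
  move=> x y z; apply/rowP => k; rewrite !addE mxE.
  have T1 : liebr x (liebr y z) 0 k = \sum_(i < 24) \sum_(j < 24) \sum_(l < 24)
      x 0 i * y 0 j * z 0 l * (\sum_(m < 24) (CZ j l m)%:~R * (CZ i m k)%:~R).
    rewrite liebrE.
    under eq_bigr => i _ do under eq_bigr => m _ do rewrite liebrE.
    exact: (L1 (x 0) (y 0) (z 0) (fun j l m => (CZ j l m)%:~R) (fun i m => (CZ i m k)%:~R)).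
  have T2 : liebr y (liebr z x) 0 k = \sum_(i < 24) \sum_(j < 24) \sum_(l < 24)
      x 0 i * y 0 j * z 0 l * (\sum_(m < 24) (CZ l i m)%:~R * (CZ j m k)%:~R).
    rewrite liebrE.
    under eq_bigr => i _ do under eq_bigr => m _ do rewrite liebrE.
    rewrite (L1 (y 0) (z 0) (x 0) (fun j l m => (CZ j l m)%:~R) (fun i m => (CZ i m k)%:~R)) rot3.
    by apply: eq_bigr => i _; apply: eq_bigr => j _; apply: eq_bigr => l _; ring.
  have T3 : liebr z (liebr x y) 0 k = \sum_(i < 24) \sum_(j < 24) \sum_(l < 24)
      x 0 i * y 0 j * z 0 l * (\sum_(m < 24) (CZ i j m)%:~R * (CZ l m k)%:~R).
    rewrite liebrE.
    under eq_bigr => i _ do under eq_bigr => m _ do rewrite liebrE.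
    rewrite (L1 (z 0) (x 0) (y 0) (fun j l m => (CZ j l m)%:~R) (fun i m => (CZ i m k)%:~R)) rot3 rot3.
    by apply: eq_bigr => i _; apply: eq_bigr => j _; apply: eq_bigr => l _; ring.
  rewrite T1 T2 T3 !sum3D; apply: big1 => i _; apply: big1 => j _; apply: big1 => l _.
  rewrite -!mulrDr -!big_split /=.
  have -> : \sum_(m < 24) ((CZ j l m)%:~R * (CZ i m k)%:~R + (CZ l i m)%:~R * (CZ j m k)%:~R
      + (CZ i j m)%:~R * (CZ l m k)%:~R) = ((\sum_(m < 24) (CZ j l m * CZ i m k + CZ l i m * CZ j m k
      + CZ i j m * CZ l m k))%:~R : R).
    by rewrite rmorph_sum; apply: eq_bigr => m _; rewrite !rmorphD !rmorphM.
  by rewrite jacZ mulr0.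
split.
  move=> x y; rewrite !metrE exchange_big; apply: eq_bigr => i _; apply: eq_bigr => j _.
  by rewrite (msymE j i); ring.
split.
  move=> x H; apply/rowP => k; rewrite mxE.
  have [p [Hp Hi]] := ndE k.
  have E : forall i : 'I_24, \sum_(j < 24) x 0 i * (delta_mx 0 p : V R) 0 j * (MZ i j)%:~R
      = x 0 i * (MZ i p)%:~R.
    move=> i; rewrite (bigD1 p) //= big1 ?addr0; first by rewrite mxE !eqxx mulr1.
    by move=> j Hj; rewrite mxE (negbTE Hj) andbF mulr0 mul0r.
  have := H (delta_mx 0 p); rewrite metrE (eq_bigr _ (fun i _ => E i)) (bigD1 k) //= big1; last first.
    by move=> i Hik; rewrite Hi // mulr0.
  rewrite addr0 => /eqP; rewrite mulf_eq0 intr_eq0 (negbTE Hp) orbF.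
  by move/eqP.
move=> x y z; rewrite !metrE.
under eq_bigr => a _ do under eq_bigr => b _ do rewrite liebrE.
under [X in _ + X]eq_bigr => a _ do under eq_bigr => b _ do rewrite liebrE.
rewrite (L2 (z 0) (x 0) (y 0) (fun i j a => (CZ i j a)%:~R) (fun a b => (MZ a b)%:~R)).
rewrite (L3 (x 0) (z 0) (y 0) (fun i j a => (CZ i j a)%:~R) (fun a b => (MZ a b)%:~R)).
rewrite sum3D; apply: big1 => i _; apply: big1 => j _; apply: big1 => l _.
rewrite -mulrDr -big_split /=.
have -> : \sum_(a < 24) ((CZ i j a)%:~R * (MZ a l)%:~R + (CZ i l a)%:~R * (MZ j a)%:~R)
   = ((\sum_(a < 24) (CZ i j a * MZ a l + CZ i l a * MZ j a))%:~R : R).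
  by rewrite rmorph_sum; apply: eq_bigr => m _; rewrite !rmorphD !rmorphM.
by rewrite invZ mulr0.
Qed.
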